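(* Let $\lambda<\kappa$ be infinite cardinals and let $X$, $Y$ be non-trivial Banach spaces. Suppose $X$ is $\mathrm{ASQ}_{<\kappa}$ (respectively, $\mathrm{SQ}_{<\kappa}$). (a) If $H\subset L_\lambda(Y,X)$ is a closed subspace containing all operators $y^*\otimes x$ with $y^*\in Y^*$, $x\in X$, then $H$ is $\mathrm{ASQ}_{<\kappa}$ (respectively, $\mathrm{SQ}_{<\kappa}$). (b) If $H\subset L_\lambda(Y^*,X)$ is a closed subspace containing all operators $y\otimes x$ with $y\in Y$, $x\in X$, then $H$ is $\mathrm{ASQ}_{<\kappa}$ (respectively, $\mathrm{SQ}_{<\kappa}$).
   Context: $L_\lambda(Y,X)=\{T\in L(Y,X):\mathrm{dens}(T(Y))\le\lambda\}$ with the operator norm, where $\mathrm{dens}$ is the density character. For $y^*\in Y^*$ and $x\in X$, $y^*\otimes x$ is the operator $y\mapsto y^*(y)x$; for $y\in Y$, $y\otimes x$ is the operator $Y^*\ni y^*\mapsto y^*(y)x$. A Banach space $Z$ is $\mathrm{ASQ}_{<\kappa}$ if for every set $A\subset S_Z$ with $|A|<\kappa$ and every $\varepsilon>0$ there exists $y\in S_Z$ with $\|x\pm y\|\le 1+\varepsilon$ for all $x\in A$; $Z$ is $\mathrm{SQ}_{<\kappa}$ if for every such $A$ there exists $y\in S_Z$ with $\|x\pm y\|\le 1$ for all $x\in A$. *)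

(* Defs.v *)
From HB Require Import structures.
From mathcomp Require Import all_boot all_order all_algebra.
From mathcomp Require Import all_classical all_reals all_analysis.
Set Implicit Arguments. Unset Strict Implicit. Unset Printing Implicit Defensive.
Import Order.TTheory GRing.Theory Num.Theory.
Import numFieldNormedType.Exports.
Local Open Scope classical_set_scope.
Local Open Scope ring_scope.

(** Cardinals are represented by (the full set of) types: a cardinal
    kappa is [set: K] for some type K. *)
Definition card_lt {T U : Type} (A : set T) (B : set U) : Prop :=
  (A #<= B)%card /\ ~ (B #<= A)%card.

Section Operators.
Variable R : realType.

Definition bdd_lin (D : lmodType R) (nD : D -> R) (X : normedModType R)
    (T : D -> X) : Prop :=
  (forall (a : R) (u v : D), T (a *: u + v) = a *: T u + T v) /\
  exists C : R, forall d : D, `|T d| <= C * nD d.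

Definition opnorm (D : lmodType R) (nD : D -> R) (X : normedModType R)
    (T : D -> X) : R :=
  sup [set `|T d| | d in [set d : D | nD d <= 1]].

Definition dens_le (X : normedModType R) (S : set X) (L : Type) : Prop :=
  exists E : set X, E `<=` S /\ (E #<= [set: L])%card /\ S `<=` closure E.

Definition L_lambda (D : lmodType R) (nD : D -> R) (X : normedModType R)
    (L : Type) : set (D -> X) :=
  [set T | bdd_lin nD T /\ dens_le (range T) L].

Definition closed_subspace_L (D : lmodType R) (nD : D -> R)
    (X : normedModType R) (L : Type) (H : set (D -> X)) : Prop :=
  H `<=` @L_lambda D nD X L /\
  H (fun _ => 0) /\
  (forall (a : R) (S T : D -> X), H S -> H T -> H (fun d => a *: S d + T d)) /\
  (forall T, @L_lambda D nD X L T ->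
     (forall e : R, 0 < e -> exists S, H S /\ opnorm nD (fun d => T d - S d) < e) ->
     H T).

Definition ASQ_lt (V : zmodType) (N : V -> R) (H : set V) (K : Type) : Prop :=
  forall A : set V, A `<=` H -> (forall x, A x -> N x = 1) ->
    card_lt A [set: K] ->
    forall e : R, 0 < e ->
      exists y : V, H y /\ N y = 1 /\
        forall x, A x -> N (x + y) <= 1 + e /\ N (x - y) <= 1 + e.

Definition SQ_lt (V : zmodType) (N : V -> R) (H : set V) (K : Type) : Prop :=
  forall A : set V, A `<=` H -> (forall x, A x -> N x = 1) ->
    card_lt A [set: K] ->
      exists y : V, H y /\ N y = 1 /\
        forall x, A x -> N (x + y) <= 1 /\ N (x - y) <= 1.

Section Dual.
Variable Y : normedModType R.

Definition dual_pred : {pred Y -> R^o} :=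
  fun f => `[< bdd_lin (fun y : Y => `|y|) f >].

Lemma dual_closed : subsemimod_closed dual_pred.
Proof.
split; [split|].
- apply/asboolP; split=> [a u v|]; first by rewrite scaler0 addr0.
  by exists 0 => d; rewrite normr0 mul0r.
- move=> f g /asboolP[fl [Cf hf]] /asboolP[gl [Cg hg]]; apply/asboolP; split.
    move=> a u v; rewrite !fctE fl gl scalerDr.
    by rewrite -!addrA; congr (_ + _); rewrite addrCA.
  exists (Cf + Cg) => d /=; rewrite mulrDl.
  by apply: (le_trans (ler_normD _ _)); apply: lerD.
- move=> a f /asboolP[fl [Cf hf]]; apply/asboolP; split.
    by move=> b u v; rewrite !fctE fl scalerDr !scalerA mulrC.
  exists (`|a| * Cf) => d /=; rewrite normrZ -mulrA.
  by apply: ler_wpM2l => //.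
Qed.

HB.instance Definition _ := GRing.isSubmodClosed.Build R (Y -> R^o)
  dual_pred dual_closed.

Record dual := Dual { dval :> Y -> R^o ; dvalP : dval \in dual_pred }.
HB.instance Definition _ := [isSub for dval].
HB.instance Definition _ := [Choice of dual by <:].
HB.instance Definition _ := [SubChoice_isSubLmodule of dual by <:].

Definition dual_norm (f : dual) : R := opnorm (fun y : Y => `|y|) (dval f).

End Dual.

Definition tens_dual (Y X : normedModType R) (ys : dual Y) (x : X) : Y -> X :=
  fun y => dval ys y *: x.

Definition tens_bidual (Y X : normedModType R) (y : Y) (x : X) : dual Y -> X :=
  fun ys => dval ys y *: x.

Definition nontrivial (X : normedModType R) : Prop := exists x : X, x != 0.

End Operators.

(* Main.v *)
Require Import Defs.
From HB Require Import structures.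
From mathcomp Require Import all_boot all_order all_algebra.
From mathcomp Require Import all_classical all_reals all_analysis.
From mathcomp Require Import lra ring.
Set Implicit Arguments. Unset Strict Implicit. Unset Printing Implicit Defensive.
Import Order.TTheory GRing.Theory Num.Theory.
Import numFieldNormedType.Exports.
Local Open Scope classical_set_scope.
Local Open Scope ring_scope.
Definition inj_le T U (A : set T) (B : set U) :=
  exists f : T -> U, (forall x, A x -> B (f x)) /\
    (forall x y, A x -> A y -> f x = f y -> x = y).

Lemma inj_le_card T U (A : set T) (B : set U) : inj_le A B -> (A #<= B)%card.
Proof.
move=> [f [fAB finj]].
have : $|{injfun A >-> B}|.
  apply/injfunPex; exists f; first by move=> x /fAB.
  by move=> x y /set_mem Ax /set_mem Ay; apply: finj.
by case=> g; apply: inj_card_le g.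
Qed.

Lemma card_inj_le T U (u0 : U) (A : set T) (B : set U) : (A #<= B)%card -> inj_le A B.
Proof.
move/card_leP => [g].
pose f x := match pselect (A x) with
  | left h => set_val (g (SigSub (mem_set h)))
  | right _ => u0 end.
exists f; split.
  by move=> x Ax; rewrite /f; case: pselect => // h; apply: set_valP.
move=> x y Ax Ay; rewrite /f; case: pselect => // hx; case: pselect => // hy.
move=> /val_inj /(@inj _ _ _ g) => /(_ (mem_set I) (mem_set I)) h.
by have := congr1 val h.
Qed.
Lemma zorn_base T (Q : set (set T)) (B : set T) : B !=set0 -> Q B ->
  (forall F : set (set T), F `<=` [set G | Q G /\ B `<=` G] ->
     total_on F subset -> F !=set0 -> Q (\bigcup_(G in F) G)) ->
  exists A, [/\ Q A, B `<=` A & forall C, A `<` C -> ~ Q C].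
Proof.
move=> [b Bb] QB hch.
case: (@Zorn_bigcup T [set G | G = set0 \/ (Q G /\ B `<=` G)]).
  move=> F FP Ftot.
  have [allE|/existsPNP[G0 FG0 G0n]] := pselect (forall G, F G -> G = set0).
    left; apply/seteqP; split=> // x [G FG]; rewrite (allE _ FG) //.
  have [G0e|[QG0 BG0]] := FP _ FG0; first by [].
  right; split; last by move=> x Bx; exists G0 => //; apply: BG0.
  have -> : \bigcup_(G in F) G = \bigcup_(G in F `&` [set G | G != set0]) G.
    apply/seteqP; split=> x [G FG Gx]; exists G => //.
      by split => //; apply/eqP => Ge; rewrite Ge in Gx.
    by case: FG.
  apply: hch.
  + move=> G [FG /eqP Gn]; by have [//|] := FP _ FG.
  + by move=> G1 G2 [F1 _] [F2 _]; apply: Ftot.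
  + by exists G0; split => //; apply/eqP.
move=> A [[A0|[QA BA]] Amax].
- subst A; exfalso; apply: (Amax B).
    by split=> // /(_ b Bb).
  exact: (or_intror (conj QB (fun x h => h))).
- exists A; split => // C AC QC; apply: (Amax C) => //.
  exact: (or_intror (conj QC (subset_trans BA (properW AC)))).
Qed.
Lemma chain2 T (F : set (set T)) G1 G2 : total_on F subset -> F G1 -> F G2 ->
  exists G, [/\ F G, G1 `<=` G & G2 `<=` G].
Proof.
move=> Ftot F1 F2; have [S12|S21] := Ftot _ _ F1 F2.
  by exists G2; split.
by exists G1; split.
Qed.

Lemma inj_le_total T U (t0 : T) (u0 : U) (A : set T) (B : set U) :
  inj_le A B \/ inj_le B A.
Proof.
have [[a0 Aa0]|An] := pselect (A !=set0); last first.
  by left; exists (fun _ => u0); split => [x|x y] Ax; exfalso; apply: An; exists x.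
have [[b0 Bb0]|Bn] := pselect (B !=set0); last first.
  by right; exists (fun _ => t0); split => [x|x y] Bx; exfalso; apply: Bn; exists x.
pose Q (G : set (T * U)) := [/\ G `<=` A `*` B,
  (forall a b b', G (a, b) -> G (a, b') -> b = b') &
  (forall a a' b, G (a, b) -> G (a', b) -> a = a')].
have [M [[MAB Mf Mi] _ Mmax]] : exists M, [/\ Q M, [set (a0, b0)] `<=` M &
    forall C, M `<` C -> ~ Q C].
  apply: zorn_base; first by exists (a0, b0).
    split.
    - by move=> [a b] /= [-> ->].
    - by move=> a b b' [_ ->] [_ ->].
    - by move=> a a' b [-> _] [-> _].
  move=> F FQ Ftot _; split.
  - by move=> p [G /FQ [[GAB _ _] _] Gp]; apply: GAB.
  - move=> a b b' [G1 F1 h1] [G2 F2 h2].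
    have [G [FG s1 s2]] := chain2 Ftot F1 F2.
    have [[_ Gf _] _] := FQ _ FG.
    by apply: Gf (s1 _ h1) (s2 _ h2).
  - move=> a a' b [G1 F1 h1] [G2 F2 h2].
    have [G [FG s1 s2]] := chain2 Ftot F1 F2.
    have [[_ _ Gi] _] := FQ _ FG.
    by apply: Gi (s1 _ h1) (s2 _ h2).
have [Adom|/existsPNP[a Aa Ana]] := pselect (forall a, A a -> exists b, M (a, b)).
  left.
  have /choice[f hf] : forall a, exists b, A a -> M (a, b).
    move=> a. have [Aa|nAa] := pselect (A a).
      by have [b Mab] := Adom a Aa; exists b.
    by exists u0.
  exists f; split.
    by move=> x Ax; have [] := MAB _ (hf x Ax).
  by move=> x y Ax Ay fxy; apply: (Mi x y (f x) (hf x Ax)); rewrite fxy; apply: hf.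
have [Bran|/existsPNP[b Bb Bnb]] := pselect (forall b, B b -> exists a, M (a, b)).
  right.
  have /choice[f hf] : forall b, exists a, B b -> M (a, b).
    move=> b. have [Bb|nBb] := pselect (B b).
      by have [a1 Mab] := Bran b Bb; exists a1.
    by exists t0.
  exists f; split.
    by move=> x Bx; have [] := MAB _ (hf x Bx).
  by move=> x y Bx By fxy; apply: (Mf (f x) x y (hf x Bx)); rewrite fxy; apply: hf.
exfalso; apply: (Mmax (M `|` [set (a, b)])).
  split; first by move=> p Mp; left.
  by move=> /(_ (a, b) (or_intror erefl)) Mab; apply: Ana; exists b.
split.
- by move=> p [/MAB //|-> /=]; split.
- move=> x y y' [h|/pair_equal_spec[hx hy]] [h'|/pair_equal_spec[hx' hy']].
  + exact: Mf h h'.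
  + by exfalso; apply: Ana; exists y; rewrite -hx'.
  + by exfalso; apply: Ana; exists y'; rewrite -hx.
  + by rewrite hy hy'.
- move=> x x' y [h|/pair_equal_spec[hx hy]] [h'|/pair_equal_spec[hx' hy']].
  + exact: Mi h h'.
  + by exfalso; apply: Bnb; exists x; rewrite -hy'.
  + by exfalso; apply: Bnb; exists x'; rewrite -hy.
  + by rewrite hx hx'.
Qed.
Lemma inj_le_trans T U V (A : set T) (B : set U) (C : set V) :
  inj_le A B -> inj_le B C -> inj_le A C.
Proof.
move=> [f [fAB fi]] [g [gBC gi]]; exists (g \o f); split => [x Ax|x y Ax Ay /=].
  exact/gBC/fAB.
by move/(gi _ _ (fAB _ Ax) (fAB _ Ay)); apply: fi.
Qed.

Lemma inj_le_sub T (A B : set T) : A `<=` B -> inj_le A B.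
Proof. by move=> AB; exists id; split => // x Ax; apply: AB. Qed.

Lemma inj_le_X T U T' U' (A : set T) (B : set U) (A' : set T') (B' : set U') :
  inj_le A A' -> inj_le B B' -> inj_le (A `*` B) (A' `*` B').
Proof.
move=> [f [fA fi]] [g [gB gi]]; exists (fun p => (f p.1, g p.2)); split.
  by move=> [a b] [/= Aa Bb]; split; [apply: fA|apply: gB].
move=> [a b] [a' b'] [/= Aa Bb] [/= Aa' Bb'] /pair_equal_spec[e1 e2].
by rewrite (fi _ _ Aa Aa' e1) (gi _ _ Bb Bb' e2).
Qed.

(* pair-coding into S using an injective val on S x S *)
Section Coding.
Variables (T : Type) (S D : set T) (val : T * T -> T) (m1 m2 : T) (r : T -> T).
Hypotheses (vS : forall p q, S p -> S q -> S (val (p, q)))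
  (vI : forall p q p' q', S p -> S q -> S p' -> S q' ->
     val (p, q) = val (p', q') -> p = p' /\ q = q')
  (Sm1 : S m1) (Sm2 : S m2) (m12 : m1 <> m2)
  (rS : forall x, D x -> S (r x))
  (rI : forall x y, D x -> D y -> r x = r y -> x = y)
  (SD : forall x, S x -> D x -> False).

Definition psi x := if pselect (S x) then val (x, m1) else val (r x, m2).

Lemma psiS x : (S `|` D) x -> S (psi x).
Proof.
rewrite /psi; case: pselect => Sx; first by move=> _; apply: vS.
by case=> // Dx; apply: vS => //; apply: rS.
Qed.

Lemma psiI x y : (S `|` D) x -> (S `|` D) y -> psi x = psi y -> x = y.
Proof.
move=> Ux Uy; rewrite /psi; case: pselect => Sx; case: pselect => Sy.
- by move/vI => /(_ Sx Sm1 Sy Sm1) [].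
- case: Uy => // Dy; move/vI => /(_ Sx Sm1 (rS Dy) Sm2) [_ /m12] //.
- case: Ux => // Dx; move/vI => /(_ (rS Dx) Sm2 Sy Sm1) [_ /esym/m12] //.
- case: Ux => // Dx; case: Uy => // Dy.
  by move/vI => /(_ (rS Dx) Sm2 (rS Dy) Sm2) [/rI] => /(_ Dx Dy).
Qed.

Definition pcode (z : T * T) := val (psi z.1, psi z.2).

Lemma pcodeS p q : (S `|` D) p -> (S `|` D) q -> S (pcode (p, q)).
Proof. by move=> Up Uq; apply: vS; apply: psiS. Qed.

Lemma pcodeI p q p' q' : (S `|` D) p -> (S `|` D) q -> (S `|` D) p' -> (S `|` D) q' ->
  pcode (p, q) = pcode (p', q') -> p = p' /\ q = q'.
Proof.
move=> Up Uq Up' Uq' /vI [] /=; try exact: psiS.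
by move=> /(psiI Up Up') -> /(psiI Uq Uq') ->.
Qed.

End Coding.
Definition SG T (G : set ((T * T) * T)) := [set x | exists v, G ((x, x), v)].

Definition QH T (M : set T) (G : set ((T * T) * T)) :=
  [/\ forall p q v, G ((p, q), v) -> [/\ SG G p, SG G q & SG G v],
      forall p q, SG G p -> SG G q -> exists v, G ((p, q), v),
      forall p q v v', G ((p, q), v) -> G ((p, q), v') -> v = v',
      forall p q p' q' v, G ((p, q), v) -> G ((p', q'), v) -> p = p' /\ q = q'
    & SG G `<=` M].

Lemma SG_sub T (G G' : set ((T * T) * T)) : G `<=` G' -> SG G `<=` SG G'.
Proof. by move=> GG' x [v Gv]; exists v; apply: GG'. Qed.

Lemma hessenberg T (M : set T) : inj_le [set: nat] M -> inj_le (M `*` M) M.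
Proof.
move=> [g [gM gI']].
have gI : forall i j, g i = g j -> i = j by move=> i j; apply: gI'.
have [h [_ hI']] : inj_le [set: nat * nat] [set: nat].
  by apply: (card_inj_le 0%N); have /card_eqPle[] := card_nat2.
have hI : forall a b, h a = h b -> a = b by move=> a b; apply: hI'.
pose G0 := [set z | exists i j, z = ((g i, g j), g (h (i, j)))].
have SG0 : forall x, SG G0 x <-> exists i, x = g i.
  move=> x; split.
    by move=> [v [i [j /pair_equal_spec[/pair_equal_spec[-> _] _]]]]; exists i.
  by move=> [i ->]; exists (g (h (i, i))); exists i, i.
have [G [[Gd Gt Gf Gi GM] G0G Gmax]] : exists G, [/\ QH M G, G0 `<=` G &
    forall C, G `<` C -> ~ QH M C].
  apply: zorn_base.
  - by exists ((g 0, g 0), g (h (0, 0)))%N; exists 0%N, 0%N.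
  - split.
    + move=> p q v [i [j /pair_equal_spec[/pair_equal_spec[-> ->] ->]]].
      by split; apply/SG0; [exists i|exists j|exists (h (i, j))].
    + by move=> p q /SG0[i ->] /SG0[j ->]; exists (g (h (i, j))); exists i, j.
    + move=> p q v v' [i [j /pair_equal_spec[/pair_equal_spec[-> ->] ->]]].
      move=> [i' [j' /pair_equal_spec[/pair_equal_spec[/gI ei /gI ej] ->]]].
      by rewrite ei ej.
    + move=> p q p' q' v [i [j /pair_equal_spec[/pair_equal_spec[-> ->] ->]]].
      move=> [i' [j' /pair_equal_spec[/pair_equal_spec[-> ->] /gI/hI]]].
      by case=> -> ->.
    + by move=> x /SG0[i ->]; apply: gM.
  - move=> F FQ Ftot _.
    have SGU : forall x, SG (\bigcup_(G in F) G) x -> exists2 G, F G & SG G x.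
      by move=> x [v [G FG Gv]]; exists G => //; exists v.
    have SGU' : forall G x, F G -> SG G x -> SG (\bigcup_(G in F) G) x.
      by move=> G x FG; apply: SG_sub => z Gz; exists G.
    split.
    + move=> p q v [G FG Gv]; have [[Gd _ _ _ _] _] := FQ _ FG.
      by have [] := Gd _ _ _ Gv; split; apply: SGU' FG _.
    + move=> p q /SGU[G1 F1 h1] /SGU[G2 F2 h2].
      have [G [FG s1 s2]] := chain2 Ftot F1 F2.
      have [[_ Gt _ _ _] _] := FQ _ FG.
      have [v Gv] := Gt _ _ (SG_sub s1 h1) (SG_sub s2 h2).
      by exists v; exists G.
    + move=> p q v v' [G1 F1 h1] [G2 F2 h2].
      have [G [FG s1 s2]] := chain2 Ftot F1 F2.
      have [[_ _ Gf _ _] _] := FQ _ FG.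
      exact: Gf (s1 _ h1) (s2 _ h2).
    + move=> p q p' q' v [G1 F1 h1] [G2 F2 h2].
      have [G [FG s1 s2]] := chain2 Ftot F1 F2.
      have [[_ _ _ Gi _] _] := FQ _ FG.
      exact: Gi (s1 _ h1) (s2 _ h2).
    + move=> x /SGU[G FG Gx]; have [[_ _ _ _ GM] _] := FQ _ FG.
      exact: GM.
pose S := SG G.
have Sm1 : S (g 0%N) by apply: (SG_sub G0G); apply/SG0; exists 0%N.
have Sm2 : S (g 1%N) by apply: (SG_sub G0G); apply/SG0; exists 1%N.
have m12 : g 0%N <> g 1%N by move/gI.
have /choice[val hv] : forall z, exists v, S z.1 -> S z.2 -> G (z, v).
  move=> [p q]; have [[Sp Sq]|nS] := pselect (S p /\ S q).
    by have [v Gv] := Gt _ _ Sp Sq; exists v.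
  by exists p => Sp Sq; exfalso; apply: nS.
have vS : forall p q, S p -> S q -> S (val (p, q)).
  by move=> p q Sp Sq; have [] := Gd _ _ _ (hv (p, q) Sp Sq).
have vI : forall p q p' q', S p -> S q -> S p' -> S q' ->
    val (p, q) = val (p', q') -> p = p' /\ q = q'.
  move=> p q p' q' Sp Sq Sp' Sq' e.
  have h1 := hv (p, q) Sp Sq; have h2 := hv (p', q') Sp' Sq'.
  by rewrite e in h1; apply: Gi h1 h2.
have [[k [kS kI]]|[k [kS kI]]] := inj_le_total (g 0%N) (g 0%N) (M `\` S) S.
  have U : forall x, M x -> (S `|` (M `\` S)) x.
    by move=> x Mx; have [Sx|nSx] := pselect (S x); [left|right].
  exists (pcode S val (g 0%N) (g 1%N) k); split.
    move=> [p q] [/= Mp Mq]; apply: GM.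
    exact: (pcodeS vS Sm1 Sm2 kS (U p Mp) (U q Mq)).
  move=> [p q] [p' q'] [/= Mp Mq] [/= Mp' Mq'].
  by move/(pcodeI vS vI Sm1 Sm2 m12 kS kI (U p Mp) (U q Mq) (U _ Mp') (U _ Mq')) => [-> ->].
pose T' := k @` S.
have /choice[kinv hki] : forall x, exists a, T' x -> S a /\ k a = x.
  move=> x; have [[a Sa <-]|nT] := pselect (T' x); first by exists a.
  by exists x.
have rS : forall x, T' x -> S (kinv x) by move=> x /hki[].
have rI : forall x y, T' x -> T' y -> kinv x = kinv y -> x = y.
  by move=> x y Tx Ty e; have [_ <-] := hki _ Tx; have [_ <-] := hki _ Ty; rewrite e.
have SD : forall x, S x -> T' x -> False.
  by move=> x Sx [a Sa ka]; have [_] := kS _ Sa; rewrite ka.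
pose U := S `|` T'.
pose w z := k (pcode S val (g 0%N) (g 1%N) kinv z).
have wT : forall p q, U p -> U q -> T' (w (p, q)).
  move=> p q Up Uq; exists (pcode S val (g 0%N) (g 1%N) kinv (p, q)) => //.
  exact: (@pcodeS _ S T' val _ _ kinv vS Sm1 Sm2 rS p q Up Uq).
have wI : forall p q p' q', U p -> U q -> U p' -> U q' ->
    w (p, q) = w (p', q') -> p = p' /\ q = q'.
  move=> p q p' q' Up Uq Up' Uq' e.
  apply: (pcodeI vS vI Sm1 Sm2 m12 rS rI Up Uq Up' Uq'); apply: kI e.
    exact: (@pcodeS _ S T' val _ _ kinv vS Sm1 Sm2 rS p q Up Uq).
  exact: (@pcodeS _ S T' val _ _ kinv vS Sm1 Sm2 rS p' q' Up' Uq').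
pose E := [set z : (T * T) * T |
  [/\ U z.1.1, U z.1.2, ~ (S z.1.1 /\ S z.1.2) & z.2 = w z.1]].
pose G' := G `|` E.
have SGG : forall x, SG G' x <-> U x.
  move=> x; split.
    by move=> [v [Gx|[/= Ux _ _ _]]] //; left; exists v.
  case=> [Sx|Tx]; first by apply: (@SG_sub _ G G') Sx => z Gz; left.
  exists (w (x, x)); right; split => //=; try by right.
  by case=> Sx _; apply: SD Sx Tx.
have k0T : T' (k (g 0%N)) by exists (g 0%N).
exfalso; apply: (Gmax G').
  split; first by move=> z Gz; left.
  move=> sub; have : G' ((g 0%N, k (g 0%N)), w (g 0%N, k (g 0%N))).
    by right; split => //=; [left|right|case=> _ /SD; apply].
  by move=> /sub /Gd [_ [v Gkv] _]; apply: (SD _ _ k0T); exists v.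
split.
- move=> p q v [/Gd[Sp Sq Sv]|[/= Up Uq _ ->]].
    by split; apply/SGG; left.
  by split; apply/SGG => //; right; apply: wT.
- move=> p q /SGG Up /SGG Uq; have [[Sp Sq]|nS] := pselect (S p /\ S q).
    by have [v Gv] := Gt _ _ Sp Sq; exists v; left.
  by exists (w (p, q)); right; split.
- move=> p q v v' [Gv|[_ _ /= nS ->]] [Gv'|[_ _ /= nS' ->]] //.
  + exact: Gf Gv Gv'.
  + by exfalso; apply: nS'; have [] := Gd _ _ _ Gv.
  + by exfalso; apply: nS; have [] := Gd _ _ _ Gv'.
- move=> p q p' q' v [Gv|[/= Up Uq nS ->]] [Gv'|[/= Up' Uq' nS' e]].
  + exact: Gi Gv Gv'.
  + exfalso; have [_ _ Sv] := Gd _ _ _ Gv; apply: SD Sv _; rewrite e; exact: wT.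
  + exfalso; have [_ _ Sv] := Gd _ _ _ Gv'; apply: SD Sv _; exact: wT.
  + exact: wI Up Uq Up' Uq' e.
- move=> x /SGG [Sx|[a Sa <-]]; first exact: GM.
  by have [] := kS _ Sa.
Qed.
Lemma prod_lt T U V (t0 : T) (u0 : U) (A : set T) (B : set U) (C : set V) :
  inj_le A C -> ~ inj_le C A -> inj_le B C -> ~ inj_le C B ->
  inj_le [set: nat] B ->
  inj_le (A `*` B) C /\ ~ inj_le C (A `*` B).
Proof.
move=> AC nCA BC nCB NB.
case: (inj_le_total t0 u0 A B) => [AB|BA].
  have BB : inj_le (A `*` B) B.
    exact: inj_le_trans (inj_le_X AB (inj_le_sub (@subset_refl _ B))) (hessenberg NB).
  by split; [exact: inj_le_trans BB BC|move=> CAB; apply: nCB; exact: inj_le_trans CAB BB].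
have AA : inj_le (A `*` B) A.
  apply: inj_le_trans (inj_le_X (inj_le_sub (@subset_refl _ A)) BA) (hessenberg _).
  exact: inj_le_trans NB BA.
by split; [exact: inj_le_trans AA AC|move=> CAB; apply: nCA; exact: inj_le_trans CAB AA].
Qed.
Section HB.
Variables (R : realType) (Y : normedModType R).

Definition QB (G : set (Y * R)) :=
  (forall a u v s t, G (u, s) -> G (v, t) -> G (a *: u + v, a * s + t)) /\
  (forall u s, G (u, s) -> s <= `|u|).

Lemma QB0 G z : QB G -> G z -> G (0, 0).
Proof.
move=> [Gc _] Gz; case: z Gz => u s Gus.
have := Gc (-1) u u s s Gus Gus.
by rewrite scaleN1r addNr mulN1r addNr.
Qed.

Lemma lin_comb (a al be : R) (u v y : Y) :
  a *: (u + al *: y) + (v + be *: y) = (a *: u + v) + (a * al + be) *: y.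
Proof.
by rewrite scalerDr scalerA scalerDl addrACA.
Qed.

Lemma hb_step G y : QB G -> (exists z, G z) -> ~ (exists s, G (y, s)) ->
  exists G', QB G' /\ G `<` G'.
Proof.
move=> QG [z0 Gz0] ny.
have G00 := QB0 QG Gz0.
case: QG => Gc Gd.
pose E := [set x | exists u s, G (u, s) /\ x = s - `|u - y|].
have E0 : E !=set0 by exists (0 - `|0 - y|); exists 0, 0.
have Eub : forall v t, G (v, t) -> ubound E (`|v + y| - t).
  move=> v t Gvt _ [u [s [Gus ->]]].
  have := Gd _ _ (Gc 1 u v s t Gus Gvt); rewrite scale1r mul1r => h.
  suff : s + t <= `|u - y| + `|v + y| by lra.
  apply: (le_trans h); have -> : u + v = (u - y) + (v + y).
    by rewrite addrACA addNr addr0.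
  exact: ler_normD.
pose c := sup E.
have hs : has_sup E by split => //; exists (`|0 + y| - 0); exact: Eub G00.
have cE : forall u s, G (u, s) -> s - `|u - y| <= c.
  by move=> u s Gus; apply: sup_upper_bound hs _ _; exists u, s.
have cU : forall v t, G (v, t) -> c <= `|v + y| - t.
  by move=> v t Gvt; apply: ge_sup E0 (Eub _ _ Gvt).
pose G' := [set z | exists u s a, G (u, s) /\ z = (u + a *: y, s + a * c)].
exists G'; split.
  split.
  - move=> a u v s t [u1 [s1 [al [G1 /pair_equal_spec[-> ->]]]]].
    move=> [v1 [t1 [be [G2 /pair_equal_spec[-> ->]]]]].
    exists (a *: u1 + v1), (a * s1 + t1), (a * al + be); split; first exact: Gc.
    by rewrite lin_comb; congr pair; ring.
  - move=> w r [u [s [al [Gus /pair_equal_spec[-> ->]]]]].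
    have Gsc : forall b, G (b *: u, b * s).
      by move=> b; have := Gc b u 0 s 0 Gus G00; rewrite addr0 addr0.
    case: (ltgtP al 0) => [alneg|alpos|->].
    + pose be := - al; have bepos : 0 < be by rewrite /be oppr_gt0.
      have := cE _ _ (Gsc be^-1) => h.
      have h2 : be * (be^-1 * s - `|be^-1 *: u - y|) <= be * c by rewrite ler_pM2l.
      rewrite mulrBr mulrA mulfV ?mul1r in h2; last by rewrite gt_eqF.
      have -> : u + al *: y = be *: (be^-1 *: u - y).
        by rewrite scalerBr scalerA mulfV ?scale1r ?gt_eqF // /be scaleNr opprK.
      rewrite normrZ gtr0_norm //.
      have -> : al * c = - (be * c) by rewrite /be mulNr opprK.
      lra.
    + have := cU _ _ (Gsc al^-1) => h.
      have h2 : al * c <= al * (`|al^-1 *: u + y| - al^-1 * s) by rewrite ler_pM2l.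
      rewrite mulrBr mulrA mulfV ?mul1r in h2; last by rewrite gt_eqF.
      have -> : u + al *: y = al *: (al^-1 *: u + y).
        by rewrite scalerDr scalerA mulfV ?scale1r ?gt_eqF.
      rewrite normrZ gtr0_norm //.
      lra.
    + by rewrite scale0r addr0 mul0r addr0; apply: Gd.
split.
  move=> [u s] Gus; exists u, s, 0; split => //.
  by rewrite scale0r addr0 mul0r addr0.
move=> sub; apply: ny; exists c; apply: sub.
by exists 0, 0, 1; split => //; rewrite scale1r mul1r !add0r.
Qed.
Lemma hb_exists (y0 : Y) : `|y0| = 1 -> exists f : Y -> R,
  [/\ forall a u v, f (a *: u + v) = a * f u + f v,
      forall y, `|f y| <= `|y| & f y0 = 1].
Proof.
move=> ny0.
pose B := [set z : Y * R | exists t, z = (t *: y0, t)].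
have QBB : QB B.
  split.
  - move=> a u v s t [t1 /pair_equal_spec[-> ->]] [t2 /pair_equal_spec[-> ->]].
    by exists (a * t1 + t2); rewrite scalerDl scalerA.
  - move=> u s [t /pair_equal_spec[-> ->]]; rewrite normrZ ny0 mulr1.
    exact: ler_norm.
have By0 : B (y0, 1) by exists 1; rewrite scale1r.
have [G [QG BG Gmax]] : exists G, [/\ QB G, B `<=` G & forall C, G `<` C -> ~ QB C].
  apply: zorn_base => //; first by exists (y0, 1).
  move=> F FQ Ftot _; split.
  - move=> a u v s t [G1 F1 h1] [G2 F2 h2]; have [G [FG s1 s2]] := chain2 Ftot F1 F2.
    by have [[Gc _] _] := FQ _ FG; exists G => //; exact: Gc (s1 _ h1) (s2 _ h2).
  - by move=> u s [G FG h]; have [[_ Gd] _] := FQ _ FG; exact: Gd h.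
have Gtot : forall y, exists s, G (y, s).
  move=> y; apply: contrapT => ny.
  have [G' [QG' GG']] := hb_step QG (ex_intro _ _ (BG _ By0)) ny.
  exact: Gmax GG' QG'.
have G00 := QB0 QG (BG _ By0).
have /choice[f hf] := Gtot.
case: QG => Gc Gd.
have uniq : forall y s s', G (y, s) -> G (y, s') -> s = s'.
  move=> y s s' h h'.
  have := Gd _ _ (Gc (-1) y y s s' h h'); rewrite scaleN1r addNr normr0 mulN1r => h1.
  have := Gd _ _ (Gc (-1) y y s' s h' h); rewrite scaleN1r addNr normr0 mulN1r => h2.
  lra.
exists f; split.
- by move=> a u v; apply: uniq (hf _) (Gc _ _ _ _ _ (hf u) (hf v)).
- move=> y; rewrite ler_norml; apply/andP; split; last exact: Gd (hf y).
  have := Gd _ _ (Gc (-1) y 0 (f y) 0 (hf y) G00).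
  by rewrite scaleN1r addr0 mulN1r addr0 normrN; lra.
- exact: uniq (hf y0) (BG _ By0).
Qed.
End HB.
Section Key.
Variables (R : realType) (X : normedModType R).

Lemma closure_approx (E : set X) z d : 0 < d -> closure E z ->
  exists w, E w /\ `|z - w| < d.
Proof.
move=> d0 /(_ (ball z d) (nbhsx_ballx _ _ d0)) [w [Ew bw]].
by exists w; split => //; move: bw; rewrite -ball_normE /ball_ /=.
Qed.

Variables (E : set X) (x : X) (eps : R).
Hypotheses (eps0 : 0 <= eps) (nx : `|x| = 1)
  (hE : forall w b, E w -> w != 0 -> `|b| = 1 ->
        `| (`|w|)^-1 *: w + b *: x| <= 1 + eps).

Lemma key1 w b : E w -> `|b| = 1 ->
  `|w + b *: x| <= `|w| * (1 + eps) + `|1 - `|w| |.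
Proof.
move=> Ew nb; have [->|w0] := eqVneq w 0.
  by rewrite add0r normr0 mul0r add0r subr0 normr1 normrZ nb nx mulr1.
have n0 : 0 < `|w| by rewrite normr_gt0.
have -> : w + b *: x = `|w| *: (`|w|^-1 *: w + b *: x) + (1 - `|w|) *: (b *: x).
  rewrite scalerDr scalerA mulfV ?gt_eqF // scale1r -addrA; congr (_ + _).
  by rewrite -scalerDl addrC subrK scale1r.
apply: (le_trans (ler_normD _ _)); rewrite !normrZ gtr0_norm // nb nx mulr1.
rewrite mulr1 lerD2r ler_pM2l //; exact: hE.
Qed.

Lemma key2 z b : closure E z -> `|z| <= 1 -> `|b| = 1 -> `|z + b *: x| <= 1 + eps.
Proof.
move=> Ez z1 nb; apply/ler_addgt0Pr => e e0.
pose d := e / (3 + eps).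
have e0' := eps0.
have d0 : 0 < d by apply: divr_gt0 => //; lra.
have [w [Ew zw]] := closure_approx d0 Ez.
have h1 := key1 Ew nb.
have h2 : `|z + b *: x| <= `|w + b *: x| + `|z - w|.
  have -> : z + b *: x = (w + b *: x) + (z - w) by rewrite [RHS]addrC addrA subrK.
  exact: ler_normD.
have h3 := ler_dist_dist z w.
have h4 : `|w| <= `|z| + d.
  move: h3; rewrite ler_norml => /andP[h _]; lra.
have h5 : `|1 - `|w| | <= 1 - `|z| + d.
  rewrite ler_norml; move: h3; rewrite ler_norml => /andP[ha hb]; apply/andP; split; lra.
have h6 : `|w| * (1 + eps) <= (`|z| + d) * (1 + eps) by rewrite ler_wpM2r //; lra.
have h7 : `|z| * eps <= eps by rewrite ler_piMl.
have h8 : d * (3 + eps) = e by rewrite /d mulrVK // unitfE; apply/lt0r_neq0 => //; lra.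
have h9 : d * eps >= 0 by apply: mulr_ge0 => //; apply: ltW.
have h6' : `|w| * (1 + eps) <= `|z| + `|z| * eps + d + d * eps.
  by apply: (le_trans h6); rewrite le_eqVlt; apply/orP; left; apply/eqP; ring.
have h8' : 3 * d + d * eps = e by rewrite -h8; ring.
lra.
Qed.

Lemma key3 z a : closure E z -> `|z| <= 1 -> `|a| <= 1 -> `|z + a *: x| <= 1 + eps.
Proof.
move=> Ez z1 a1; have e0' := eps0.
have hp := key2 Ez z1 (normr1 _).
have hm : `|z + (-1) *: x| <= 1 + eps.
  by apply: key2 => //; rewrite normrN normr1.
rewrite scale1r in hp; rewrite scaleN1r in hm.
have -> : z + a *: x = ((1 + a) / 2) *: (z + x) + ((1 - a) / 2) *: (z - x).
  rewrite !scalerDr !scalerN -addrACA -scalerDl -scalerBl.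
  have -> : (1 + a) / 2 + (1 - a) / 2 = 1 :> R by field.
  have -> : (1 + a) / 2 - (1 - a) / 2 = a :> R by field.
  by rewrite scale1r.
move: a1; rewrite ler_norml => /andP[a1 a2].
apply: (le_trans (ler_normD _ _)); rewrite !normrZ.
have p1 : `|1 + a| = 1 + a by apply: ger0_norm; lra.
have p2 : `|1 - a| = 1 - a by apply: ger0_norm; lra.
have p3 : `|2^-1| = 2^-1 :> R by apply: ger0_norm.
rewrite ?normrM p1 p2 p3.
have ha : (1 + a) / 2 * `|z + x| <= (1 + a) / 2 * (1 + eps).
  by apply: ler_wpM2l => //; apply: divr_ge0; lra.
have hb : (1 - a) / 2 * `|z - x| <= (1 - a) / 2 * (1 + eps).
  by apply: ler_wpM2l => //; apply: divr_ge0; lra.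
have -> : 1 + eps = (1 + a) / 2 * (1 + eps) + (1 - a) / 2 * (1 + eps) by field.
exact: lerD.
Qed.

End Key.
Section Opnorm.
Variables (R : realType) (D : lmodType R) (nD : D -> R) (X : normedModType R).

Lemma opnorm_ub (T : D -> X) d : bdd_lin nD T -> (forall d, 0 <= nD d) ->
  nD d <= 1 -> `|T d| <= opnorm nD T.
Proof.
move=> [_ [C hC]] nD0 d1; apply: sup_upper_bound; last by exists d.
split; first by exists `|T d|, d.
exists `|C| => _ [e e1 <-]; apply: (le_trans (hC e)).
apply: (le_trans (ler_wpM2r (nD0 e) (ler_norm C))).
by rewrite -[X in _ <= X]mulr1; apply: ler_wpM2l.
Qed.

Lemma opnorm_le (T : D -> X) M : (exists d, nD d <= 1) ->
  (forall d, nD d <= 1 -> `|T d| <= M) -> opnorm nD T <= M.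
Proof.
move=> [d0 h0] hM; apply: ge_sup; first by exists `|T d0|, d0.
by move=> _ [e e1 <-]; apply: hM.
Qed.
End Opnorm.
Lemma norm_unit_scale (R : realType) (X : normedModType R) (w : X) :
  w != 0 -> `| (`|w|)^-1 *: w| = 1.
Proof.
move=> w0; rewrite normrZ ger0_norm ?invr_ge0 // mulVf //.
by rewrite normr_eq0.
Qed.

Lemma main_gen (R : realType) (K L : Type) (X : normedModType R)
  (D : lmodType R) (nD : D -> R) (H : set (D -> X)) (eps : R) :
  0 <= eps -> (forall d, 0 <= nD d) -> (exists d, nD d <= 1) ->
  infinite_set [set: K] -> infinite_set [set: L] -> card_lt [set: L] [set: K] ->
  H `<=` L_lambda nD L ->
  (forall A : set X, (forall z, A z -> `|z| = 1) -> card_lt A [set: K] ->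
     exists x : X, `|x| = 1 /\
       forall z, A z -> `|z + x| <= 1 + eps /\ `|z - x| <= 1 + eps) ->
  (forall x : X, `|x| = 1 -> exists S, [/\ H S, opnorm nD S = 1 &
      forall d, nD d <= 1 -> exists a : R, `|a| <= 1 /\ S d = a *: x]) ->
  forall A : set (D -> X), A `<=` H -> (forall T, A T -> opnorm nD T = 1) ->
  card_lt A [set: K] ->
  exists S, [/\ H S, opnorm nD S = 1 &
    forall T, A T -> opnorm nD (T + S) <= 1 + eps /\ opnorm nD (T - S) <= 1 + eps].
Proof.
move=> eps0 nD0 ball0 infK infL [LK nKL] HL Xprop tens A AH A1 [AK nKA].
have [k0 _] := infinite_setN0 infK.
have [l0 _] := infinite_setN0 infL.
have /choice[Ef hEf] : forall T, exists E : set X, A T ->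
    [/\ E `<=` range T, inj_le E [set: L] & range T `<=` closure E].
  move=> T; have [AT|nAT] := pselect (A T); last by exists set0.
  have [_ [E [ER [EL RE]]]] := HL _ (AH _ AT).
  by exists E => _; split => //; exact: (card_inj_le l0 EL).
pose Dset := [set w | exists2 T, A T & Ef T w].
pose D' := [set u | exists w, [/\ Dset w, w != 0 & u = (`|w|)^-1 *: w]].
have D'1 : forall u, D' u -> `|u| = 1.
  by move=> _ [w [_ w0 ->]]; apply: norm_unit_scale.
have D'L : inj_le D' (A `*` [set: L]).
  apply: (@inj_le_trans _ _ _ _ Dset).
    have /choice[wu hwu] : forall u, exists w, D' u -> [/\ Dset w, w != 0 & u = (`|w|)^-1 *: w].
      move=> u; have [[w hw]|nu] := pselect (D' u); first by exists w.
      by exists 0.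
    exists wu; split; first by move=> u /hwu [].
    move=> u u' Du Du' e; have [_ _ ->] := hwu u Du.
    by have [_ _ ->] := hwu u' Du'; rewrite e.
  have /choice[pk hpk] : forall w, exists T, Dset w -> A T /\ Ef T w.
    move=> w; have [[T AT ET]|nw] := pselect (Dset w); first by exists T.
    by exists (fun _ => 0).
  have /choice[io hio] : forall T, exists f : X -> L, A T ->
      forall w w', Ef T w -> Ef T w' -> f w = f w' -> w = w'.
    move=> T; have [AT|nAT] := pselect (A T); last by exists (fun _ => l0).
    have [_ [f [_ fi]]] := hEf T AT.
    by exists f => _ w w' Ew Ew'; apply: fi.
  exists (fun w => (pk w, io (pk w) w)); split.
    by move=> w /hpk [AT _].
  move=> w w' /hpk[AT ET] /hpk[AT' ET'] /pair_equal_spec[e1 e2].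
  rewrite -e1 in ET' e2; exact: hio AT _ _ ET ET' e2.
have [ALK nKAL] : inj_le (A `*` [set: L]) [set: K] /\ ~ inj_le [set: K] (A `*` [set: L]).
  apply: prod_lt.
  - exact: (fun _ => 0).
  - exact: l0.
  - exact: (card_inj_le k0 AK).
  - by move/inj_le_card.
  - exact: (card_inj_le k0 LK).
  - by move/inj_le_card.
  - exact: (card_inj_le l0 (proj1 (infiniteP _) infL)).
have [x [nx hx]] : exists x : X, `|x| = 1 /\
    forall z, D' z -> `|z + x| <= 1 + eps /\ `|z - x| <= 1 + eps.
  apply: Xprop => //; split.
    exact: inj_le_card (inj_le_trans D'L ALK).
  by move/(card_inj_le 0) => KD'; apply: nKAL; apply: inj_le_trans KD' D'L.
have [S [HS S1 Sa]] := tens _ nx.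
exists S; split => // T AT.
have [BT _] := HL _ (AH _ AT).
have [ER _ RE] := hEf T AT.
have hE : forall w b, Ef T w -> w != 0 -> `|b| = 1 ->
    `| (`|w|)^-1 *: w + b *: x| <= 1 + eps.
  move=> w b Ew w0; move/eqP; rewrite eqr_norml ler01 andbT => /orP[/eqP->|/eqP->].
    by rewrite scale1r; have [] := hx ((`|w|)^-1 *: w); first by exists w; split => //; exists T.
  by rewrite scaleN1r; have [] := hx ((`|w|)^-1 *: w); first by exists w; split => //; exists T.
have Td1 : forall d, nD d <= 1 -> `|T d| <= 1.
  by move=> d d1; rewrite -(A1 _ AT); apply: opnorm_ub.
split; apply: opnorm_le => // d d1; have [a [a1 Sd]] := Sa d d1.
  have -> : (T + S) d = T d + a *: x by rewrite -Sd.
  by apply: (key3 eps0 nx hE) => //; [apply: RE; exists d|apply: Td1].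
have -> : (T - S) d = T d + (- a) *: x by rewrite scaleNr -Sd.
apply: (key3 eps0 nx hE) => //; [apply: RE; exists d|apply: Td1|] => //.
by rewrite normrN.
Qed.
Section Duals.
Variables (R : realType) (Y : normedModType R).

Lemma dual_bdd (ys : dual Y) : bdd_lin (fun y : Y => `|y|) (dval ys).
Proof. by have := dvalP ys; rewrite /dual_pred unfold_in => /asboolP. Qed.

Lemma dvalE (a : R) (u v : dual Y) (y : Y) :
  dval (a *: u + v) y = a * dval u y + dval v y.
Proof. by []. Qed.

Lemma dval0 (y : Y) : dval (0 : dual Y) y = 0.
Proof. by []. Qed.

Lemma mk_dual (f : Y -> R) : (forall a u v, f (a *: u + v) = a * f u + f v) ->
  (forall y, `|f y| <= `|y|) -> exists ys : dual Y, dval ys = f.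
Proof.
move=> fl fb.
have P : (f : Y -> R^o) \in @dual_pred R Y.
  rewrite unfold_in; apply/asboolP; split; first by [].
  by exists 1 => d; rewrite mul1r.
by exists (Dual P).
Qed.

End Duals.
Lemma unit_vec (R : realType) (Y : normedModType R) : nontrivial Y ->
  exists y0 : Y, `|y0| = 1.
Proof. by move=> [y y0]; exists ((`|y|)^-1 *: y); apply: norm_unit_scale. Qed.

Lemma tens_a (R : realType) (X Y : normedModType R) (H : set (Y -> X)) :
  nontrivial Y -> (forall (ys : dual Y) (x : X), H (tens_dual ys x)) ->
  forall x : X, `|x| = 1 -> exists S, [/\ H S, opnorm (fun y : Y => `|y|) S = 1 &
    forall d, `|d| <= 1 -> exists a : R, `|a| <= 1 /\ S d = a *: x].
Proof.
move=> /unit_vec [y0 ny0] Ht x nx.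
have [f [fl fb f1]] := hb_exists ny0.
have [ys ysf] := mk_dual fl fb.
have Sd : forall d, tens_dual ys x d = f d *: x by move=> d; rewrite /tens_dual ysf.
exists (tens_dual ys x); split => //.
  apply: le_anti; apply/andP; split.
    apply: opnorm_le; first by exists 0; rewrite normr0 ler01.
    by move=> d d1; rewrite Sd normrZ nx mulr1; apply: le_trans d1.
  have <- : `|tens_dual ys x y0| = 1 by rewrite Sd f1 scale1r.
  apply: opnorm_ub => //; last by rewrite ny0.
  split; first by move=> a u v; rewrite !Sd fl scalerDl scalerA.
  by exists 1 => d; rewrite Sd normrZ nx mulr1 mul1r.
by move=> d d1; exists (f d); split; [apply: le_trans d1|].
Qed.

Lemma tens_b (R : realType) (X Y : normedModType R) (H : set (dual Y -> X)) :
  nontrivial Y -> (forall (y : Y) (x : X), H (tens_bidual y x)) ->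
  forall x : X, `|x| = 1 -> exists S, [/\ H S, opnorm (@dual_norm R Y) S = 1 &
    forall d, dual_norm d <= 1 -> exists a : R, `|a| <= 1 /\ S d = a *: x].
Proof.
move=> /unit_vec [y0 ny0] Ht x nx.
have [f [fl fb f1]] := hb_exists ny0.
have [fs fsf] := mk_dual fl fb.
have Sd : forall d, tens_bidual y0 x d = dval d y0 *: x by [].
have dn0 : forall d : dual Y, 0 <= dual_norm d.
  move=> d; apply: le_trans (opnorm_ub (d := 0) (dual_bdd d) _ _) => //.
  by rewrite normr0 ler01.
have dy0 : forall d : dual Y, `|dval d y0| <= dual_norm d.
  by move=> d; apply: opnorm_ub (dual_bdd d) _ _ => //; rewrite ny0.
exists (tens_bidual y0 x); split => //.
  apply: le_anti; apply/andP; split.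
    apply: opnorm_le.
      exists 0; apply: le_trans ler01; apply: opnorm_le; first by exists 0; rewrite normr0 ler01.
      by move=> d _; rewrite dval0 normr0.
    by move=> d d1; rewrite Sd normrZ nx mulr1; apply: le_trans d1.
  have <- : `|tens_bidual y0 x fs| = 1 by rewrite Sd fsf f1 scale1r.
  apply: opnorm_ub => //.
    split; first by move=> a u v; rewrite !Sd dvalE scalerDl scalerA.
    by exists 1 => d; rewrite Sd normrZ nx mulr1 mul1r.
  apply: opnorm_le; first by exists 0; rewrite normr0 ler01.
  by move=> d d1; rewrite fsf; apply: le_trans d1.
by move=> d d1; exists (dval d y0); split; [apply: le_trans d1|].
Qed.
Theorem theorem4p6 (R : realType) (K L : Type)
  (X Y : completeNormedModType R) :
  infinite_set [set: K] -> infinite_set [set: L] ->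
  card_lt [set: L] [set: K] ->
  nontrivial X -> nontrivial Y ->
  (* ASQ case *)
  (ASQ_lt (fun x : X => `|x|) setT K ->
     (forall H : set (Y -> X),
        closed_subspace_L (fun y : Y => `|y|) L H ->
        (forall (ys : dual Y) (x : X), H (tens_dual ys x)) ->
        ASQ_lt (@opnorm R Y (fun y : Y => `|y|) X) H K) /\
     (forall H : set (dual Y -> X),
        closed_subspace_L (@dual_norm R Y) L H ->
        (forall (y : Y) (x : X), H (tens_bidual y x)) ->
        ASQ_lt (@opnorm R (dual Y) (@dual_norm R Y) X) H K)) /\
  (* SQ case *)
  (SQ_lt (fun x : X => `|x|) setT K ->
     (forall H : set (Y -> X),
        closed_subspace_L (fun y : Y => `|y|) L H ->
        (forall (ys : dual Y) (x : X), H (tens_dual ys x)) ->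
        SQ_lt (@opnorm R Y (fun y : Y => `|y|) X) H K) /\
     (forall H : set (dual Y -> X),
        closed_subspace_L (@dual_norm R Y) L H ->
        (forall (y : Y) (x : X), H (tens_bidual y x)) ->
        SQ_lt (@opnorm R (dual Y) (@dual_norm R Y) X) H K)).
Proof.
move=> infK infL LK ntX ntY.
have bY : exists d : Y, `|d| <= 1 by exists 0; rewrite normr0 ler01.
split.
  move=> hX.
  have Xp : forall e : R, 0 < e -> forall A : set X, (forall z, A z -> `|z| = 1) ->
      card_lt A [set: K] -> exists x : X, `|x| = 1 /\
      forall z, A z -> `|z + x| <= 1 + e /\ `|z - x| <= 1 + e.
    move=> e e0 A A1 AK.
    by have [y [_ [ny hy]]] := hX A (fun _ _ => I) A1 AK e e0; exists y.
  split.
  - move=> H [HL _] Ht A AH A1 AK e e0.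
    have [S [HS S1 hS]] := main_gen (ltW e0) (fun d => normr_ge0 d)
      bY infK infL LK HL (Xp e e0)
      (tens_a ntY Ht) AH A1 AK.
    by exists S.
  - move=> H [HL _] Ht A AH A1 AK e e0.
    have dn0 : forall d : dual Y, 0 <= dual_norm d.
      move=> d; apply: le_trans (opnorm_ub (d := 0) (dual_bdd d) _ _) => //.
      by rewrite normr0 ler01.
    have b0 : exists d : dual Y, dual_norm d <= 1.
      exists 0; apply: le_trans ler01; apply: opnorm_le; first by exists 0; rewrite normr0 ler01.
      by move=> d _; rewrite dval0 normr0.
    have [S [HS S1 hS]] := main_gen (ltW e0) dn0 b0 infK infL LK HL (Xp e e0)
      (tens_b ntY Ht) AH A1 AK.
    by exists S.
move=> hX.
have Xp : forall A : set X, (forall z, A z -> `|z| = 1) ->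
    card_lt A [set: K] -> exists x : X, `|x| = 1 /\
    forall z, A z -> `|z + x| <= 1 + 0 /\ `|z - x| <= 1 + 0.
  move=> A A1 AK.
  by have [y [_ [ny hy]]] := hX A (fun _ _ => I) A1 AK; exists y; rewrite addr0.
split.
- move=> H [HL _] Ht A AH A1 AK.
  have [S [HS S1 hS]] := main_gen (lexx 0) (fun d => normr_ge0 d)
    bY infK infL LK HL Xp
    (tens_a ntY Ht) AH A1 AK.
  by exists S; do 2!split => //; move=> T AT; rewrite -[1]addr0; apply: hS.
- move=> H [HL _] Ht A AH A1 AK.
  have dn0 : forall d : dual Y, 0 <= dual_norm d.
    move=> d; apply: le_trans (opnorm_ub (d := 0) (dual_bdd d) _ _) => //.
    by rewrite normr0 ler01.
  have b0 : exists d : dual Y, dual_norm d <= 1.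
    exists 0; apply: le_trans ler01; apply: opnorm_le; first by exists 0; rewrite normr0 ler01.
    by move=> d _; rewrite dval0 normr0.
  have [S [HS S1 hS]] := main_gen (lexx 0) dn0 b0 infK infL LK HL Xp
    (tens_b ntY Ht) AH A1 AK.
  by exists S; do 2!split => //; move=> T AT; rewrite -[1]addr0; apply: hS.
Qed.
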